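(* Let $S$ be a set of mutually orthogonal genuinely entangled pure states of three qubits, $\mathbb{C}^2\otimes\mathbb{C}^2\otimes\mathbb{C}^2$, that spans a proper subspace such that, for every bipartition of the three qubits, the orthogonal complement of the span of $S$ contains no pure state entangled with respect to that bipartition. Then $|S|\in\{6,7\}$, and both cardinalities $6$ and $7$ occur for such sets.
   Context: The bipartitions of three qubits $A,B,C$ are $A|BC$, $B|AC$, $C|AB$. A pure three-qubit state is genuinely entangled if it is not a product state with respect to any of these bipartitions; it is fully separable if it is of the form $|a\rangle|b\rangle|c\rangle$. Such a set $S$ is called a three-qubit unextendible entangled basis that is unextendible across every bipartition. *)

(* Defs.v *)
From HB Require Import structures.
From mathcomp Require Import all_boot all_order all_algebra.
From mathcomp Require Import complex.
From mathcomp Require Import Rstruct.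
Set Implicit Arguments. Unset Strict Implicit. Unset Printing Implicit Defensive.
Import Order.TTheory GRing.Theory Num.Theory.
Local Open Scope ring_scope.

Definition C : numClosedFieldType := (Rdefinitions.R)[i].

Definition qstate := 'rV[C]_8.

(* computational basis index |i j k> (i for A, j for B, k for C) <-> 4i+2j+k *)
Definition idx (i j k : 'I_2) : 'I_8 := inord (4 * i + 2 * j + k).

Definition coef (v : qstate) (i j k : 'I_2) : C := v 0 (idx i j k).

Definition inner (u v : qstate) : C := \sum_(l < 8) (u 0 l)^* * v 0 l.

Definition product_A_BC (v : qstate) : Prop :=
  exists (a : 'I_2 -> C) (w : 'I_2 -> 'I_2 -> C),
    forall i j k, coef v i j k = a i * w j k.
Definition product_B_AC (v : qstate) : Prop :=
  exists (b : 'I_2 -> C) (w : 'I_2 -> 'I_2 -> C),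
    forall i j k, coef v i j k = b j * w i k.
Definition product_C_AB (v : qstate) : Prop :=
  exists (c : 'I_2 -> C) (w : 'I_2 -> 'I_2 -> C),
    forall i j k, coef v i j k = c k * w i j.

Inductive bipartition := A_BC | B_AC | C_AB.

Definition product_wrt (p : bipartition) (v : qstate) : Prop :=
  match p with
  | A_BC => product_A_BC v
  | B_AC => product_B_AC v
  | C_AB => product_C_AB v
  end.

(* a (pure) state is a nonzero vector (normalisation is irrelevant) *)
Definition entangled_wrt (p : bipartition) (v : qstate) : Prop :=
  v != 0 /\ ~ product_wrt p v.

Definition genuinely_entangled (v : qstate) : Prop :=
  v != 0 /\ forall p, ~ product_wrt p v.

Definition orth_compl_span (S : seq qstate) (v : qstate) : Prop :=
  forall w, w \in (<<S>>%VS : {vspace qstate}) -> inner w v = 0.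

Definition UEB_every_bipartition (S : seq qstate) : Prop :=
  [/\ uniq S,
      forall v, v \in S -> genuinely_entangled v,
      forall u v, u \in S -> v \in S -> u != v -> inner u v = 0,
      (\dim (<<S>>%VS : {vspace qstate}) < 8)%N
    & forall p v, orth_compl_span S v -> ~ entangled_wrt p v].

(* Main.v *)
Require Import Defs.
From mathcomp Require Import all_boot all_algebra.
From mathcomp Require Import complex ring zify.
From Stdlib Require Import Classical.
Set Implicit Arguments. Unset Strict Implicit. Unset Printing Implicit Defensive.
Import GRing.Theory Num.Theory.
Local Open Scope ring_scope.

Definition o1 : 'I_2 := Ordinal (isT : (1 < 2)%N).

Lemma rv_nz_entry (F : fieldType) n (v : 'rV[F]_n) : v != 0 -> exists j, v 0 j != 0.
Proof.
move=> nz; case: (pickP (fun j => v 0 j != 0)) => [j Hj|H]; first by exists j.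
exfalso; move/negP: nz; apply; apply/eqP/rowP => j; rewrite mxE.
by move/negbFE/eqP: (H j).
Qed.

Lemma GL (F : fieldType) (m r : nat) (U : 'M[F]_(r, m + m)) :
  (forall v : 'rV_(m+m), (v <= U)%MS -> forall x y : 'I_m,
      v 0 (lshift m x) * v 0 (rshift m y) = v 0 (lshift m y) * v 0 (rshift m x)) ->
  forall u w : 'rV_(m+m), (u <= U)%MS -> u != 0 -> (forall x, u 0 (lshift m x) = 0) ->
  (w <= U)%MS -> w != 0 -> (forall x, w 0 (rshift m x) = 0) ->
  (\rank U <= 2)%N.
Proof.
move=> dep u w uU nzu ul0 wU nzw wr0.
have [j0 Hj0] := rv_nz_entry nzu.
have [x0 Hx0] : exists x0, u 0 (rshift m x0) != 0.
  move: Hj0; rewrite -(splitK j0); case: (split j0) => k /=; last by exists k.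
  by rewrite ul0 eqxx.
have [j1 Hj1] := rv_nz_entry nzw.
have [y0 Hy0] : exists y0, w 0 (lshift m y0) != 0.
  move: Hj1; rewrite -(splitK j1); case: (split j1) => k /=; first by exists k.
  by rewrite wr0 eqxx.
have uwU : ((u + w)%R <= U)%MS := addmx_sub uU wU.
have e2 : forall k, u 0 (rshift m k) * w 0 (lshift m y0) = w 0 (lshift m k) * u 0 (rshift m y0).
  move=> k; have := dep _ uwU y0 k; rewrite !mxE !ul0 !wr0 !add0r !addr0 => h.
  by rewrite mulrC h.
apply: leq_trans (mxrankS (_ : (U <= w + u)%MS)) _; last first.
  apply: leq_trans (mxrank_adds_leqif w u) _.
  exact: (leq_add (rank_leq_row w) (rank_leq_row u)).
apply/row_subP => i; move: (row i U) (row_sub i U) => z zU.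
have dz := dep _ zU.
have zuU : ((z + u)%R <= U)%MS := addmx_sub zU uU.
have zwU : ((z + w)%R <= U)%MS := addmx_sub zU wU.
have e1 : forall k, z 0 (lshift m k) * u 0 (rshift m x0) = z 0 (lshift m x0) * u 0 (rshift m k).
  move=> k; have := dep _ zuU x0 k; rewrite !mxE !ul0 !addr0 !mulrDr (dz x0 k) => /addrI h.
  by rewrite h.
have e3 : forall k, w 0 (lshift m y0) * z 0 (rshift m k) = w 0 (lshift m k) * z 0 (rshift m y0).
  move=> k; have := dep _ zwU y0 k; rewrite !mxE !wr0 !addr0 !mulrDl (dz y0 k) => /addrI h.
  by rewrite h.
set a := z 0 (lshift m x0) * u 0 (rshift m y0) / (u 0 (rshift m x0) * w 0 (lshift m y0)).
have Hy0' : u 0 (rshift m y0) != 0.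
  apply/negP => /eqP h; move: (e2 x0); rewrite h mulr0 => /eqP.
  by rewrite mulf_eq0 (negbTE Hx0) (negbTE Hy0).
set b := z 0 (rshift m y0) / u 0 (rshift m y0).
have -> : z = a *: w + b *: u.
  apply/rowP => j; rewrite -(splitK j); case: (split j) => k /=; rewrite !mxE.
    rewrite ul0 mulr0 addr0.
    have h1 : z 0 (lshift m k) = z 0 (lshift m x0) * u 0 (rshift m k) / u 0 (rshift m x0).
      by rewrite -e1 mulfK.
    have h2 : u 0 (rshift m k) = w 0 (lshift m k) * u 0 (rshift m y0) / w 0 (lshift m y0).
      by rewrite -e2 mulfK.
    rewrite h1 h2 /a; field.
    by rewrite Hx0 Hy0.
  rewrite wr0 mulr0 add0r.
  have h1 : z 0 (rshift m k) = w 0 (lshift m k) * z 0 (rshift m y0) / w 0 (lshift m y0).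
    by rewrite -e3 mulrC mulKf.
  have h2 : w 0 (lshift m k) = u 0 (rshift m k) * w 0 (lshift m y0) / u 0 (rshift m y0).
    by rewrite e2 mulfK.
  rewrite h1 h2 /b; field.
  by rewrite Hy0 Hy0'.
by apply: addmx_sub_adds; apply: scalemx_sub.
Qed.

Lemma KER (F : fieldType) (r n p : nat) (A : 'M[F]_(r, n)) (B : 'M[F]_(n, p)) :
  (\rank (A *m B) < \rank A)%N ->
  exists v : 'rV_n, [/\ (v <= A)%MS, v != 0 & v *m B = 0].
Proof.
move=> lt; have := mxrank_mul_ker A B.
set K := (A :&: kermx B)%MS => e.
have : K != 0.
  by rewrite -mxrank_eq0; apply/eqP => h; move: lt; rewrite -e h addn0 ltnn.
move=> nzK.
have [i Hi] : exists i, row i K != 0.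
  case: (pickP (fun i => row i K != 0)) => [i Hi|H]; first by exists i.
  exfalso; move/negP: nzK; apply; apply/eqP/matrixP => i j.
  move/negbFE/eqP: (H i) => /rowP /(_ j); rewrite !mxE => ->.
  by rewrite ?mxE.
exists (row i K); split => //.
  exact: submx_trans (row_sub i K) (capmxSl _ _).
apply/eqP; rewrite -sub_kermx.
exact: submx_trans (row_sub i K) (capmxSr _ _).
Qed.

Definition Lp (F : fieldType) m : 'M[F]_(m + m, m) := col_mx 1%:M 0.
Definition Rp (F : fieldType) m : 'M[F]_(m + m, m) := col_mx 0 1%:M.

Lemma Lp_E (F : fieldType) m (x : 'rV[F]_(m+m)) j : (x *m Lp F m) 0 j = x 0 (lshift m j).
Proof. by rewrite -{1}(hsubmxK x) mul_row_col mulmx1 mulmx0 addr0 mxE. Qed.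
Lemma Rp_E (F : fieldType) m (x : 'rV[F]_(m+m)) j : (x *m Rp F m) 0 j = x 0 (rshift m j).
Proof. by rewrite -{1}(hsubmxK x) mul_row_col mulmx1 mulmx0 add0r mxE. Qed.

Lemma GL2 (F : fieldType) (m r : nat) (U : 'M[F]_(r, m + m)) :
  (forall v : 'rV_(m+m), (v <= U)%MS -> forall x y : 'I_m,
      v 0 (lshift m x) * v 0 (rshift m y) = v 0 (lshift m y) * v 0 (rshift m x)) ->
  (m < \rank U)%N -> (\rank U <= 2)%N.
Proof.
move=> dep lt.
have [u [uU nzu u0]] : exists v : 'rV_(m+m), [/\ (v <= U)%MS, v != 0 & v *m Lp F m = 0].
  by apply: KER; apply: leq_ltn_trans (rank_leq_col _) lt.
have [w [wU nzw w0]] : exists v : 'rV_(m+m), [/\ (v <= U)%MS, v != 0 & v *m Rp F m = 0].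
  by apply: KER; apply: leq_ltn_trans (rank_leq_col _) lt.
apply: (GL dep uU nzu _ wU nzw).
  by move=> x; rewrite -Lp_E u0 mxE.
by move=> x; rewrite -Rp_E w0 mxE.
Qed.

Lemma image_sub (F : fieldType) r n p (U : 'M[F]_(r, n)) (P : 'M[F]_(n, p)) (y : 'rV_p) :
  (y <= U *m P)%MS -> exists2 x : 'rV_n, (x <= U)%MS & y = x *m P.
Proof.
move/submxP=> [D ->]; exists (D *m U); first exact: submxMl.
by rewrite mulmxA.
Qed.

Lemma Core (F : fieldType) (r : nat) (U : 'M[F]_(r, 4 + 4)) :
  (forall v : 'rV_(4+4), (v <= U)%MS -> forall x y : 'I_4,
      v 0 (lshift 4 x) * v 0 (rshift 4 y) = v 0 (lshift 4 y) * v 0 (rshift 4 x)) ->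
  (forall v : 'rV_(4+4), (v <= U)%MS -> forall x y : 'I_2,
      v 0 (lshift 4 (lshift 2 x)) * v 0 (lshift 4 (rshift 2 y))
      = v 0 (lshift 4 (lshift 2 y)) * v 0 (lshift 4 (rshift 2 x))) ->
  (forall v : 'rV_(4+4), (v <= U)%MS -> forall x y : 'I_2,
      v 0 (rshift 4 (lshift 2 x)) * v 0 (rshift 4 (rshift 2 y))
      = v 0 (rshift 4 (lshift 2 y)) * v 0 (rshift 4 (rshift 2 x))) ->
  (\rank U <= 2)%N.
Proof.
move=> depA dep0 dep1; rewrite leqNgt; apply/negP => lt.
have r0 : (\rank (U *m Lp F 4) <= 2)%N.
  rewrite leqNgt; apply/negP => lt'.
  suff dep' : forall v : 'rV_(2+2), (v <= U *m Lp F 4)%MS -> forall x y : 'I_2,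
      v 0 (lshift 2 x) * v 0 (rshift 2 y) = v 0 (lshift 2 y) * v 0 (rshift 2 x).
    by have := GL2 dep' lt'; rewrite leqNgt lt'.
  move=> y /image_sub [x xU ->] a b; rewrite !Lp_E; exact: dep0.
have r1 : (\rank (U *m Rp F 4) <= 2)%N.
  rewrite leqNgt; apply/negP => lt'.
  suff dep' : forall v : 'rV_(2+2), (v <= U *m Rp F 4)%MS -> forall x y : 'I_2,
      v 0 (lshift 2 x) * v 0 (rshift 2 y) = v 0 (lshift 2 y) * v 0 (rshift 2 x).
    by have := GL2 dep' lt'; rewrite leqNgt lt'.
  move=> y /image_sub [x xU ->] a b; rewrite !Rp_E; exact: dep1.
have [u [uU nzu u0]] := KER (leq_ltn_trans r0 lt).
have [w [wU nzw w0]] := KER (leq_ltn_trans r1 lt).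
have hu : forall x, u 0 (lshift 4 x) = 0 by move=> x; rewrite -Lp_E u0 mxE.
have hw : forall x, w 0 (rshift 4 x) = 0 by move=> x; rewrite -Rp_E w0 mxE.
by have := GL depA uU nzu hu wU nzw hw; rewrite leqNgt lt.
Qed.

Lemma idx00 (a : 'I_2) : (lshift 4 (lshift 2 a) : 'I_8) = idx ord0 ord0 a.
Proof. by apply: val_inj; rewrite /= inordK //= add0n; case: a => [[|[|]]]. Qed.
Lemma idx01 (a : 'I_2) : (lshift 4 (rshift 2 a) : 'I_8) = idx ord0 (Ordinal (isT : (1 < 2)%N)) a.
Proof. by apply: val_inj; rewrite /= inordK //=; case: a => [[|[|]]]. Qed.
Lemma idx10 (a : 'I_2) : (rshift 4 (lshift 2 a) : 'I_8) = idx (Ordinal (isT : (1 < 2)%N)) ord0 a.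
Proof. by apply: val_inj; rewrite /= inordK //=; case: a => [[|[|]]]. Qed.
Lemma idx11 (a : 'I_2) : (rshift 4 (rshift 2 a) : 'I_8) = idx (Ordinal (isT : (1 < 2)%N)) (Ordinal (isT : (1 < 2)%N)) a.
Proof. by apply: val_inj; rewrite /= inordK //=; case: a => [[|[|]]]. Qed.


Lemma split4 (z : 'I_4) : exists j k, (lshift 4 z : 'I_8) = idx ord0 j k /\ (rshift 4 z : 'I_8) = idx o1 j k.
Proof.
rewrite -(splitK (z : 'I_(2+2))); case: (split _) => c /=.
  by exists ord0, c; rewrite idx00 idx10; split; congr idx; apply: val_inj.
by exists o1, c; rewrite idx01 idx11; split; congr idx; apply: val_inj.
Qed.

Lemma depA_of (v : qstate) : product_A_BC v -> forall x y : 'I_4,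
  v 0 (lshift 4 x) * v 0 (rshift 4 y) = v 0 (lshift 4 y) * v 0 (rshift 4 x).
Proof.
case=> a [w H] x y.
have [j1 [k1 [-> ->]]] := split4 x; have [j2 [k2 [-> ->]]] := split4 y.
rewrite -!/(coef v _ _ _) !H; ring.
Qed.

Lemma dep0_of (v : qstate) : product_B_AC v -> forall x y : 'I_2,
      v 0 (lshift 4 (lshift 2 x)) * v 0 (lshift 4 (rshift 2 y))
      = v 0 (lshift 4 (lshift 2 y)) * v 0 (lshift 4 (rshift 2 x)).
Proof.
case=> a [w H] x y; rewrite !idx00 !idx01 -!/(coef v _ _ _) !H; ring.
Qed.

Lemma dep1_of (v : qstate) : product_B_AC v -> forall x y : 'I_2,
      v 0 (rshift 4 (lshift 2 x)) * v 0 (rshift 4 (rshift 2 y))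
      = v 0 (rshift 4 (lshift 2 y)) * v 0 (rshift 4 (rshift 2 x)).
Proof.
case=> a [w H] x y; rewrite !idx10 !idx11 -!/(coef v _ _ _) !H; ring.
Qed.

Lemma inner_suml n (c : 'I_n -> C) (X : 'I_n -> qstate) v :
  inner (\sum_i c i *: X i) v = \sum_i (c i)^* * inner (X i) v.
Proof.
rewrite /inner.
under eq_bigr => l _ do rewrite summxE rmorph_sum mulr_suml.
rewrite exchange_big; apply: eq_bigr => i _; rewrite mulr_sumr.
by apply: eq_bigr => l _; rewrite mxE rmorphM mulrA.
Qed.

Lemma inner_sumr n (c : 'I_n -> C) (X : 'I_n -> qstate) u :
  inner u (\sum_i c i *: X i) = \sum_i c i * inner u (X i).
Proof.
rewrite /inner.
under eq_bigr => l _ do rewrite summxE mulr_sumr.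
rewrite exchange_big; apply: eq_bigr => i _; rewrite mulr_sumr.
by apply: eq_bigr => l _; rewrite mxE mulrCA.
Qed.

Lemma inner_eq0 v : inner v v = 0 -> v = 0.
Proof.
rewrite /inner => h; apply/rowP => l; rewrite mxE.
have hge : forall i : 'I_8, xpredT i -> 0 <= (v 0 i)^* * v 0 i.
  by move=> i _; rewrite mulrC mul_conjC_ge0.
have := @psumr_eq0P _ _ xpredT (fun l => (v 0 l)^* * v 0 l) hge h l isT.
by move/eqP; rewrite mulrC mul_conjC_eq0 => /eqP.
Qed.

Lemma part1 (S : seq qstate) : UEB_every_bipartition S -> size S = 6%N \/ size S = 7%N.
Proof.
case=> uS GE orth dimS compl.
have nz : forall v, v \in S -> v != 0 by move=> v /GE [].
have free_S : free (in_tuple S).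
  apply/freeP => k hk j.
  have := congr1 (inner S`_j) hk.
  rewrite inner_sumr (bigD1 j) //=.
  have -> : \sum_(i < size S | i != j) k i * inner S`_j S`_i = 0.
    apply: big1 => i ij; rewrite orth ?mulr0 //; try exact: mem_nth.
    by rewrite nth_uniq // eq_sym.
  have -> : inner S`_j 0 = 0 by rewrite /inner big1 // => l _; rewrite mxE mulr0.
  rewrite addr0 => /(@eqP C); rewrite mulf_eq0 => /orP [/eqP //|/eqP h].
  have jS : S`_j \in S by apply: mem_nth.
  by move: (nz _ jS); rewrite (inner_eq0 h) eqxx.
have dimE : \dim <<S>> = size S by apply/eqP; exact: free_S.
have le7 : (size S <= 7)%N by rewrite -dimE.
suff ge6 : (6 <= size S)%N.
  by case: (size S) le7 ge6 => [|[|[|[|[|[|[|[|]]]]]]]] //= _ _; [left|right].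
rewrite leqNgt; apply/negP => lt6.
pose M : 'M[C]_(8, size S) := \matrix_(l, i) ((S`_i) 0 l)^*.
pose K := kermx M.
have rK : (3 <= \rank K)%N.
  rewrite mxrank_ker; have := rank_leq_col M; move: lt6.
  case: (\rank M) => [|[|[|[|[|[|]]]]]] //=; case: (size S) => [|[|[|[|[|[|]]]]]] //.
have prodK : forall p (v : qstate), (v <= K)%MS -> product_wrt p v.
  move=> p v vK.
  have oc : orth_compl_span S v.
    move=> w wS; rewrite (coord_span (X := in_tuple S) wS) inner_suml.
    apply: big1 => i _.
    move: vK; rewrite sub_kermx => /eqP /rowP /(_ i); rewrite !mxE => h.
    suff -> : inner (in_tuple S)`_i v = 0 by rewrite mulr0.
    rewrite /inner; apply: etrans h; apply: eq_bigr => l _; by rewrite mxE mulrC.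
  case: (classic (product_wrt p v)) => // np.
  exfalso; apply: (compl p v oc); split => //.
  apply/negP => /eqP v0; apply: np; rewrite v0.
  by case: p; exists (fun _ => 0), (fun _ _ => 0) => i j k; rewrite /coef mxE mulr0.
have := Core (U := K) (fun v vK => depA_of (prodK A_BC v vK))
  (fun v vK => dep0_of (prodK B_AC v vK)) (fun v vK => dep1_of (prodK B_AC v vK)).
by rewrite leqNgt rK.
Qed.

Definition vec (s : seq int) : qstate := \row_(l < 8) (nth 0 s l)%:~R.

Definition sumz (n : nat) (f : nat -> int) : int := foldr (fun l acc => f l + acc) 0 (iota 0 n).

Lemma sumN (R : nmodType) n (f : nat -> R) :
  \sum_(l < n) f l = foldr (fun l acc => f l + acc) 0 (iota 0 n).
Proof.
rewrite -(big_mkord xpredT f) /index_iota subn0.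
by elim: (iota 0 n) => [|l r IH]; rewrite ?big_nil ?big_cons ?IH.
Qed.

Lemma sumz_intr n (f : nat -> int) :
  (sumz n f)%:~R = \sum_(l < n) ((f l)%:~R : C).
Proof.
rewrite (sumN n (fun l => ((f l)%:~R : C))) /sumz; elim: (iota 0 n) => [|l r IH] //=.
by rewrite intrD IH.
Qed.

Lemma vecE s (l : 'I_8) : vec s 0 l = (nth 0 s l)%:~R.
Proof. by rewrite mxE. Qed.

Lemma inner_vec s v : inner (vec s) v = \sum_(l < 8) (nth 0 s l)%:~R * v 0 l.
Proof. by apply: eq_bigr => l _; rewrite vecE rmorph_int. Qed.

Definition dotz (s t : seq int) : int := sumz 8 (fun l => nth 0 s l * nth 0 t l).

Lemma inner_vec_vec s t : inner (vec s) (vec t) = (dotz s t)%:~R.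
Proof.
rewrite inner_vec /dotz sumz_intr; apply: eq_bigr => l _.
by rewrite vecE intrM.
Qed.

Lemma coef_vec s (i j k : 'I_2) : coef (vec s) i j k = (nth 0 s (4 * i + 2 * j + k))%:~R.
Proof.
rewrite /coef /idx mxE inordK //.
by case: i j k => [[|[|//]] ?] [[|[|//]] ?] [[|[|//]] ?].
Qed.

Definition idx3 (i j k : nat) := (4 * i + 2 * j + k)%N.
Definition bits := [:: 0%N; 1%N].
Definition quads : seq (nat * nat * nat * nat) :=
  [:: (0,0,0,0); (0,0,0,1); (0,0,1,0); (0,0,1,1); (0,1,0,0); (0,1,0,1); (0,1,1,0); (0,1,1,1); (1,0,0,0); (1,0,0,1); (1,0,1,0); (1,0,1,1); (1,1,0,0); (1,1,0,1); (1,1,1,0); (1,1,1,1)]%N.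
Definition ok2 (q : nat * nat * nat * nat) :=
  let: (a, b, c, d) := q in [&& a < 2, b < 2, c < 2 & d < 2]%N.
Lemma quads_ok : all ok2 quads. Proof. by []. Qed.

Definition minA (s : seq int) (q : nat * nat * nat * nat) : int :=
  let: (j, k, j', k') := q in
  nth 0 s (idx3 0 j k) * nth 0 s (idx3 1 j' k') - nth 0 s (idx3 0 j' k') * nth 0 s (idx3 1 j k).
Definition minB (s : seq int) (q : nat * nat * nat * nat) : int :=
  let: (i, k, i', k') := q in
  nth 0 s (idx3 i 0 k) * nth 0 s (idx3 i' 1 k') - nth 0 s (idx3 i' 0 k') * nth 0 s (idx3 i 1 k).
Definition minC (s : seq int) (q : nat * nat * nat * nat) : int :=
  let: (i, j, i', j') := q in
  nth 0 s (idx3 i j 0) * nth 0 s (idx3 i' j' 1) - nth 0 s (idx3 i' j' 0) * nth 0 s (idx3 i j 1).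

Lemma cv s (a b c : nat) : (a < 2)%N -> (b < 2)%N -> (c < 2)%N ->
  coef (vec s) (inord a) (inord b) (inord c) = (nth 0 s (idx3 a b c))%:~R.
Proof. by move=> ha hb hc; rewrite coef_vec !inordK. Qed.

Lemma prodA_min s : product_A_BC (vec s) -> forall q, ok2 q -> minA s q = 0.
Proof.
case=> a [w H] [[[j k] j'] k'] /and4P[hj hk hj' hk'] /=.
apply/eqP; rewrite subr_eq0; apply/eqP; apply: (@intr_inj C).
have h0 : (0 < 2)%N by []. have h1 : (1 < 2)%N by [].
by rewrite !intrM -!cv // !H; ring.
Qed.
Lemma prodB_min s : product_B_AC (vec s) -> forall q, ok2 q -> minB s q = 0.
Proof.
case=> a [w H] [[[j k] j'] k'] /and4P[hj hk hj' hk'] /=.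
apply/eqP; rewrite subr_eq0; apply/eqP; apply: (@intr_inj C).
have h0 : (0 < 2)%N by []. have h1 : (1 < 2)%N by [].
by rewrite !intrM -!cv // !H; ring.
Qed.
Lemma prodC_min s : product_C_AB (vec s) -> forall q, ok2 q -> minC s q = 0.
Proof.
case=> a [w H] [[[j k] j'] k'] /and4P[hj hk hj' hk'] /=.
apply/eqP; rewrite subr_eq0; apply/eqP; apply: (@intr_inj C).
have h0 : (0 < 2)%N by []. have h1 : (1 < 2)%N by [].
by rewrite !intrM -!cv // !H; ring.
Qed.

Definition nonprod (s : seq int) :=
  [&& has (fun q => minA s q != 0) quads, has (fun q => minB s q != 0) quads
    & has (fun q => minC s q != 0) quads].

Lemma zero_prod p : product_wrt p 0.
Proof. by case: p; exists (fun _ => 0), (fun _ _ => 0) => i j k; rewrite /coef mxE mulr0. Qed.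

Lemma GE_vec s : nonprod s -> genuinely_entangled (vec s).
Proof.
case/and3P => hA hB hC.
have np : forall p, ~ product_wrt p (vec s).
  case=> /= H.
  - case/hasP: hA => q qq; rewrite (prodA_min H (allP quads_ok q qq)) eqxx //.
  - case/hasP: hB => q qq; rewrite (prodB_min H (allP quads_ok q qq)) eqxx //.
  - case/hasP: hC => q qq; rewrite (prodC_min H (allP quads_ok q qq)) eqxx //.
split=> //; apply/negP => /eqP h; apply: (np A_BC); rewrite h; exact: zero_prod.
Qed.

Lemma vec_inj s t : size s = 8%N -> size t = 8%N -> vec s = vec t -> s = t.
Proof.
move=> hs ht H; apply: (@eq_from_nth _ 0); first by rewrite hs ht.
move=> l; rewrite hs => hl.
have := congr1 (fun M : qstate => M 0 (Ordinal hl)) H; rewrite !mxE /=.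
exact: (@intr_inj C).
Qed.

Definition wsum (L : seq (seq int)) (W : seq int) (a b : nat) : int :=
  sumz (size L) (fun i => nth 0 W i * nth 0 (nth [::] L i) a * nth 0 (nth [::] L i) b).

Lemma ord2_cases (i : 'I_2) : i = ord0 \/ i = o1.
Proof. by case: i => [[|[|//]] H]; [left|right]; apply: val_inj. Qed.

Lemma UEB_of (L : seq (seq int)) (W : seq int) (N : int) (T : seq nat) :
  all (fun s => size s == 8%N) L -> uniq L ->
  all (fun s => all (fun t => (s == t) || (dotz s t == 0)) L) L ->
  all nonprod L ->
  (size L < 8)%N -> N != 0 ->
  all (fun a => (a < 8)%N && all (fun b => wsum L W a b == N * (a == b)%:Z) (iota 0 8)) T ->
  all (fun a => a \in T) (iota 2 6) ->
  UEB_every_bipartition (map vec L).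
Proof.
move=> Hsz Hu Ho Hnp HL HN HT HT2.
split.
- rewrite map_inj_in_uniq // => s t sL tL; apply: vec_inj; apply/eqP.
    exact: (allP Hsz). exact: (allP Hsz).
- by move=> v /mapP [s sL ->]; apply: GE_vec; apply: (allP Hnp).
- move=> u v /mapP [s sL ->] /mapP [t tL ->] ne; rewrite inner_vec_vec.
  move: (allP (allP Ho s sL) t tL); case: eqP => [st|_ /= /eqP ->].
    by rewrite st eqxx in ne.
  by [].
- by apply: leq_ltn_trans (dim_span _) _; rewrite size_map.
move=> p v oc [nzv np]; apply: np.
have orth_s : forall s, s \in L -> inner (vec s) v = 0.
  by move=> s sL; apply: oc; apply: memv_span; apply: map_f.
have z : forall a, a \in T -> v 0 (inord a) = 0.
  move=> a aT; have /andP[a8 Hb] := allP HT a aT.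
  have h0 : \sum_(i < size L) ((nth 0 W i * nth 0 (nth [::] L i) a)%:~R
      * inner (vec (nth [::] L i)) v) = 0.
    by apply: big1 => i _; rewrite orth_s ?mulr0 //; apply: mem_nth.
  move: h0; under eq_bigr => i _ do rewrite inner_vec mulr_sumr.
  rewrite exchange_big.
  have e : forall l : 'I_8, \sum_(i < size L) ((nth 0 W i * nth 0 (nth [::] L i) a)%:~R
      * ((nth 0 (nth [::] L i) l)%:~R * v 0 l)) = (N * (a == l)%:Z)%:~R * v 0 l.
    move=> l; have hl : (nat_of_ord l \in iota 0 8) by rewrite mem_iota /=.
    rewrite -(eqP (allP Hb _ hl)) /wsum sumz_intr mulr_suml.
    by apply: eq_bigr => i _; rewrite !intrM mulrA.
  under eq_bigr => l _ do rewrite e.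
  rewrite (bigD1 (inord a : 'I_8)) // big1 /=.
    rewrite inordK // eqxx addr0 mulr1 => /(@eqP C); rewrite mulf_eq0 intr_eq0 (negbTE HN) /=.
    by move/eqP.
  move=> l nl; suff -> : (a == l) = false by rewrite mulr0 mul0r.
  apply/negP => /eqP al; move: nl; rewrite al.
  have -> : inord l = l by apply: val_inj; rewrite /= inordK.
  by rewrite eqxx.
have cz : forall i j k : 'I_2, (2 <= 4 * i + 2 * j + k)%N -> coef v i j k = 0.
  move=> i j k h; rewrite /coef /idx z //; apply: (allP HT2); rewrite mem_iota.
  rewrite h /=.
  have := ltn_ord i; have := ltn_ord j; have := ltn_ord k; lia.
case: p => /=.
- exists (fun i => if i == ord0 then 1 else 0), (fun j k => coef v ord0 j k) => i j k.
  by case: (ord2_cases i) => ->; case: (ord2_cases j) => ->; case: (ord2_cases k) => ->;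
    rewrite ?(cz o1) ?(cz ord0 o1) // ?eqxx /= ?mul1r ?mul0r ?mulr1 ?mulr0.
- exists (fun j => if j == ord0 then 1 else 0), (fun i k => coef v i ord0 k) => i j k.
  by case: (ord2_cases i) => ->; case: (ord2_cases j) => ->; case: (ord2_cases k) => ->;
    rewrite ?(cz o1) ?(cz ord0 o1) // ?eqxx /= ?mul1r ?mul0r ?mulr1 ?mulr0.
- exists (fun k => coef v ord0 ord0 k), (fun i j => if (i == ord0) && (j == ord0) then 1 else 0) => i j k.
  by case: (ord2_cases i) => ->; case: (ord2_cases j) => ->; case: (ord2_cases k) => ->;
    rewrite ?(cz o1) ?(cz ord0 o1) // ?eqxx /= ?mul1r ?mul0r ?mulr1 ?mulr0.
Qed.

Definition L7 : seq (seq int) :=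
  [:: [:: 0; 1; 0; 0; 0; 0; 1; 0];
      [:: 0; 1; 0; 0; 0; 0; -1; 0];
      [:: 0; 0; 1; 0; 0; 1; 0; 0];
      [:: 0; 0; 1; 0; 0; -1; 0; 0];
      [:: 0; 0; 0; 1; 1; 0; 0; 1];
      [:: 0; 0; 0; -1; 1; 0; 0; 0];
      [:: 0; 0; 0; 1; 1; 0; 0; -2]].
Definition W7 : seq int := [:: 3; 3; 3; 3; 2; 3; 1].

Definition L6 : seq (seq int) :=
  [:: [:: 0; 0; 0; 1; 1; 0; 1; 1];
      [:: 0; 0; 0; 1; -1; 0; 1; -1];
      [:: 0; 0; 0; 1; 1; 0; -1; -1];
      [:: 0; 0; 0; 1; -1; 0; -1; 1];
      [:: 0; 0; 1; 0; 0; 1; 0; 0];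
      [:: 0; 0; 1; 0; 0; -1; 0; 0]].
Definition W6 : seq int := [:: 1; 1; 1; 1; 2; 2].

Lemma UEB7 : UEB_every_bipartition (map vec L7).
Proof.
apply: (@UEB_of L7 W7 6 (iota 1 7)).
- by [].
- by [].
- by [].
- by [].
- by [].
- by [].
- by [].
- by [].
Qed.

Lemma UEB6 : UEB_every_bipartition (map vec L6).
Proof.
apply: (@UEB_of L6 W6 4 (iota 2 6)).
- by [].
- by [].
- by [].
- by [].
- by [].
- by [].
- by [].
- by [].
Qed.

Local Close Scope ring_scope.

Theorem proposition5 :
  (forall S : seq qstate, UEB_every_bipartition S -> size S = 6%N \/ size S = 7%N)
  /\ (exists S : seq qstate, UEB_every_bipartition S /\ size S = 6%N)
  /\ (exists S : seq qstate, UEB_every_bipartition S /\ size S = 7%N).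
Proof.
split; first exact: part1.
split.
  by exists (map vec L6); split; [exact: UEB6 | rewrite size_map].
by exists (map vec L7); split; [exact: UEB7 | rewrite size_map].
Qed.
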